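(* Let $A\ge0$ and let $\lambda$ be a composition whose first run has length at most $A$, having at least one run other than its first and last runs, and let $M$ be the maximal length of such an interior run; assume $M>2$. Then for all $x\in[0,1]$, $$\sup_{t\in[0,1]}\big|F_{X_I\mid X_F=x}(t)-F_{X_I}(t)\big|\le\frac{4A^2}{M-2},$$ in the continuous model associated with $\lambda$.
   Context: A composition $\lambda$ of $n$ is a finite sequence of positive integers $(\lambda_1,\dots,\lambda_k)$ with $\sum_j\lambda_j=n$; its descent set is $D_\lambda=\{\lambda_1,\lambda_1+\lambda_2,\dots,\lambda_1+\dots+\lambda_{k-1}\}\subseteq\{1,\dots,n-1\}$. The continuous model associated with $\lambda$: $(x_1,\dots,x_n)$ uniformly distributed on $P_\lambda=\{x\in[0,1]^n:\ x_i\ge x_{i+1}\text{ if }i\in D_\lambda,\ x_i\le x_{i+1}\text{ if }i\notin D_\lambda,\ 1\le i\le n-1\}$, with $X_I=x_1$, $X_F=x_n$. A run of $\lambda$ is a maximal set of consecutive cells $\{a,\dots,b\}$, $b\ge a+1$, such that either $\{a,\dots,b-1\}\cap D_\lambda=\emptyset$ or $\{a,\dots,b-1\}\subseteq D_\lambda$; its length is $b-a+1$. The first (resp. last) run is the one containing cell $1$ (resp. $n$). $F_{X_I}$ is the cumulative distribution function of $X_I$ and $F_{X_I\mid X_F=x}$ the conditional one given $X_F=x$. *)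

(* Defs.v *)
From Stdlib Require Import Reals Lra Lia Arith List ClassicalEpsilon.
Open Scope R_scope.

Definition is_composition (lam : list nat) : Prop := Forall (fun k => (0 < k)%nat) lam.

Definition csize (lam : list nat) : nat := fold_right Nat.add 0%nat lam.

Definition descent (lam : list nat) (i : nat) : Prop :=
  exists k, (1 <= k < length lam)%nat /\ i = csize (firstn k lam).

Definition uniform_block (lam : list nat) (a b : nat) : Prop :=
  (1 <= a < b)%nat /\ (b <= csize lam)%nat /\
  ((forall i, (a <= i < b)%nat -> ~ descent lam i) \/
   (forall i, (a <= i < b)%nat -> descent lam i)).

(* a run {a,...,b}: a maximal uniform block of consecutive cells *)
Definition is_run (lam : list nat) (a b : nat) : Prop :=
  uniform_block lam a b /\
  (forall a' b', (a' <= a)%nat -> (b <= b')%nat -> uniform_block lam a' b' ->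
     a' = a /\ b' = b).

Definition run_length (a b : nat) : nat := (b - a + 1)%nat.

Definition is_first_run (lam : list nat) (a b : nat) : Prop := is_run lam a b /\ a = 1%nat.
Definition is_last_run (lam : list nat) (a b : nat) : Prop := is_run lam a b /\ b = csize lam.
Definition is_interior_run (lam : list nat) (a b : nat) : Prop :=
  is_run lam a b /\ a <> 1%nat /\ b <> csize lam.

(* ---------- The polytope P_lambda (points are 1-indexed: v 1, ..., v n) ---------- *)

Definition in_P (lam : list nat) (v : nat -> R) : Prop :=
  (forall i, (1 <= i <= csize lam)%nat -> 0 <= v i <= 1) /\
  (forall i, (1 <= i)%nat -> (i + 1 <= csize lam)%nat ->
     (descent lam i -> v (S i) <= v i) /\ (~ descent lam i -> v i <= v (S i))).

Definition ind (P : Prop) : R := if excluded_middle_informative P then 1 else 0.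

(* Riemann integral of f over [a,b] (0 if f is not Riemann integrable) *)
Definition RInt (f : R -> R) (a b : R) : R :=
  match excluded_middle_informative (inhabited (Riemann_integrable f a b)) with
  | left H => RiemannInt (epsilon H (fun _ => True))
  | right _ => 0
  end.

Definition upd (v : nat -> R) (j : nat) (y : R) : nat -> R :=
  fun i => if Nat.eqb i j then y else v i.

Fixpoint iint (k : nat) (F : (nat -> R) -> R) : R :=
  match k with
  | O => F (fun _ => 0)
  | S k' => RInt (fun y => iint k' (fun v => F (upd v (S k') y))) 0 1
  end.

(* F_{X_I}(t) = P(x_1 <= t) for x uniform on P_lambda *)
Definition cdf_XI (lam : list nat) (t : R) : R :=
  iint (csize lam) (fun v => ind (in_P lam v /\ v 1%nat <= t)) /
  iint (csize lam) (fun v => ind (in_P lam v)).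

(* (unnormalised) density of X_F at x, restricted to x_1 <= t *)
Definition slice_dens (lam : list nat) (x t : R) : R :=
  iint (csize lam - 1) (fun v => ind (in_P lam (upd v (csize lam) x) /\
                                      upd v (csize lam) x 1%nat <= t)).

(* density of X_F at x (up to the normalising constant 1/vol P_lambda) *)
Definition dens_XF (lam : list nat) (x : R) : R :=
  iint (csize lam - 1) (fun v => ind (in_P lam (upd v (csize lam) x))).

Definition cdf_XI_given_XF (lam : list nat) (x t : R) : R :=
  slice_dens lam x t / dens_XF lam x.

(* Main.v *)
Require Import Defs.
From Stdlib Require Import Reals List Lra Lia ClassicalEpsilon FunctionalExtensionality PropExtensionality Classical.
From Coquelicot Require Import Coquelicot.
Open Scope R_scope.

Definition RI (f : R -> R) (a b : R) : R := RInt f a b.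

Lemma RInt_scal_R f a b c : ex_RInt f a b -> RI (fun x => c * f x) a b = c * RI f a b.
Proof. intros H. unfold RI. exact (RInt_scal f a b c H). Qed.
Lemma ex_RInt_scal_R f a b c : ex_RInt f a b -> ex_RInt (fun x => c * f x) a b.
Proof. intros H. unfold RI. exact (ex_RInt_scal f a b c H). Qed.
Lemma RInt_minus_R f g a b : ex_RInt f a b -> ex_RInt g a b -> RI (fun x => f x - g x) a b = RI f a b - RI g a b.
Proof. intros H1 H2. unfold RI. exact (RInt_minus f g a b H1 H2). Qed.
Lemma RInt_plus_R f g a b : ex_RInt f a b -> ex_RInt g a b -> RI (fun x => f x + g x) a b = RI f a b + RI g a b.
Proof. intros H1 H2. unfold RI. exact (RInt_plus f g a b H1 H2). Qed.
Lemma RInt_Chasles_R f a b c : ex_RInt f a b -> ex_RInt f b c -> RI f a b + RI f b c = RI f a c.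
Proof. intros H1 H2. unfold RI. exact (RInt_Chasles f a b c H1 H2). Qed.
Lemma RInt_const_R a b c : RI (fun _ => c) a b = (b - a) * c.
Proof. unfold RI. exact (RInt_const a b c). Qed.
Lemma RInt_point_R f a : RI f a a = 0.
Proof. unfold RI. exact (RInt_point a f). Qed.

Lemma RInt_ext_R (f g : R -> R) a b : (forall x, Rmin a b < x < Rmax a b -> f x = g x) -> RI f a b = RI g a b.
Proof. intros H. unfold RI. exact (RInt_ext f g a b H). Qed.
Lemma ex_RInt_ext_R (f g : R -> R) a b : (forall x, Rmin a b < x < Rmax a b -> f x = g x) -> ex_RInt f a b -> ex_RInt g a b.
Proof. intros H. unfold RI. exact (ex_RInt_ext f g a b H). Qed.

Lemma DR_ex f a b : ex_RInt f a b -> Defs.RInt f a b = RI f a b.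
Proof.
  intros H. unfold Defs.RInt.
  destruct (excluded_middle_informative _) as [Hi|Hn].
  - unfold RI. rewrite (RInt_Reals f a b (epsilon Hi (fun _ => True))). reflexivity.
  - exfalso; apply Hn; constructor; now apply ex_RInt_Reals_0.
Qed.

Lemma DR_nex f a b : ~ ex_RInt f a b -> Defs.RInt f a b = 0.
Proof.
  intros H. unfold Defs.RInt.
  destruct (excluded_middle_informative _) as [[Hi]|Hn]; auto.
  exfalso; apply H; now apply ex_RInt_Reals_1.
Qed.

Lemma DR_scal f c : Defs.RInt (fun y => f y * c) 0 1 = Defs.RInt f 0 1 * c.
Proof.
  destruct (Req_dec c 0) as [->|Hc].
  - rewrite Rmult_0_r.
    assert (E: (fun y => f y * 0) = (fun _ => 0)) by (apply functional_extensionality; intros; ring).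
    rewrite E, DR_ex. rewrite RInt_const_R. ring.
    apply ex_RInt_const.
  - destruct (classic (ex_RInt f 0 1)) as [H|H].
    + assert (H2: ex_RInt (fun y => f y * c) 0 1).
      { eapply ex_RInt_ext_R; [|apply (ex_RInt_scal_R f 0 1 c H)]; intros; simpl; ring. }
      rewrite (DR_ex _ _ _ H2), (DR_ex _ _ _ H).
      rewrite (RInt_ext_R _ (fun y => c * f y)).
      { rewrite RInt_scal_R; auto. ring. }
      intros x Hx. ring.
    + rewrite !DR_nex; auto. ring.
      intros H2. apply H.
      eapply ex_RInt_ext_R; [|apply (ex_RInt_scal_R _ 0 1 (/c) H2)]; intros; simpl; field; auto.
Qed.

Lemma iint_scal k : forall F c, iint k (fun v => F v * c) = iint k F * c.
Proof.
  induction k; intros F c; simpl; auto.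
  rewrite <- DR_scal. f_equal. apply functional_extensionality; intros y.
  apply IHk.
Qed.

Definition mk (k:nat) (v w : nat -> R) : nat -> R := fun i => if Nat.leb i k then v i else w i.
Definition rel (lam : list nat) (i:nat) (a b : R) : Prop :=
  (descent lam i -> b <= a) /\ (~ descent lam i -> a <= b).
Definition Cond lam t k (u : nat -> R) : Prop :=
  ((1 <= k)%nat -> u 1%nat <= t) /\ (forall i, (1<=i<=k)%nat -> 0 <= u i <= 1) /\
  (forall i, (1 <= i <= k)%nat -> rel lam i (u i) (u (S i))).
Definition facP lam t k y s : Prop := ((k = 0)%nat -> y <= t) /\ 0 <= y <= 1 /\ rel lam (S k) y s.
Fixpoint GG lam t k : R -> R := match k with
  | O => fun _ => 1
  | S k' => fun s => Defs.RInt (fun y => GG lam t k' y * Defs.ind (facP lam t k' y s)) 0 1 end.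

Lemma ind_and P Q : Defs.ind (P /\ Q) = Defs.ind P * Defs.ind Q.
Proof.
  unfold Defs.ind; destruct (excluded_middle_informative (P/\Q)); destruct (excluded_middle_informative P);
  destruct (excluded_middle_informative Q); try ring; tauto.
Qed.
Lemma ind_iff P Q : (P <-> Q) -> Defs.ind P = Defs.ind Q.
Proof.
  intros H; unfold Defs.ind; destruct (excluded_middle_informative P); destruct (excluded_middle_informative Q); tauto.
Qed.

Lemma Cond_S lam t k u : Cond lam t (S k) u <-> Cond lam t k u /\ facP lam t k (u (S k)) (u (S (S k))).
Proof.
  unfold Cond, facP; split.
  - intros [H1 [H2 H3]].
    split; [split; [intros; apply H1; lia | split; intros i Hi; [apply H2|apply H3]; lia] | ].
    split; [intros ->; apply H1; lia | split; [apply H2; lia | apply H3; lia]].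
  - intros [[H1 [H2 H3]] [H4 [H5 H6]]]. split; [|split].
    + intros _. destruct k. apply H4; auto. apply H1; lia.
    + intros i Hi. destruct (Nat.eq_dec i (S k)) as [->|]; auto. apply H2; lia.
    + intros i Hi. destruct (Nat.eq_dec i (S k)) as [->|]; auto. apply H3; lia.
Qed.

Lemma mk_upd k v w y : mk (S k) (upd v (S k) y) w = mk k v (upd w (S k) y).
Proof.
  apply functional_extensionality; intros i; unfold mk, upd.
  destruct (Nat.leb i (S k)) eqn:E1; destruct (Nat.leb i k) eqn:E2; destruct (Nat.eqb i (S k)) eqn:E3;
  auto; apply Nat.leb_le in E1 || apply Nat.leb_gt in E1; apply Nat.leb_le in E2 || apply Nat.leb_gt in E2;
  apply Nat.eqb_eq in E3 || apply Nat.eqb_neq in E3; lia.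
Qed.

Lemma rep lam t k : forall w, iint k (fun v => Defs.ind (Cond lam t k (mk k v w))) = GG lam t k (w (S k)).
Proof.
  induction k; intros w.
  - simpl. unfold Defs.ind. destruct (excluded_middle_informative _) as [|n]; auto.
    exfalso; apply n. unfold Cond; repeat split; intros; lia.
  - simpl. f_equal. apply functional_extensionality; intros y.
    set (w' := upd w (S k) y).
    assert (E: (fun v => Defs.ind (Cond lam t (S k) (mk (S k) (upd v (S k) y) w))) =
               (fun v => Defs.ind (Cond lam t k (mk k v w')) * Defs.ind (facP lam t k y (w (S (S k)))))).
    { apply functional_extensionality; intros v. rewrite mk_upd. fold w'.
      rewrite <- ind_and. apply ind_iff. rewrite Cond_S.
      assert (E1: mk k v w' (S k) = y).
      { unfold mk, w', upd. rewrite (proj2 (Nat.leb_gt (S k) k)) by lia. rewrite Nat.eqb_refl. auto. }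
      assert (E2: mk k v w' (S (S k)) = w (S (S k))).
      { unfold mk, w', upd. rewrite (proj2 (Nat.leb_gt (S (S k)) k)) by lia.
        rewrite (proj2 (Nat.eqb_neq (S (S k)) (S k))) by lia. auto. }
      rewrite E1, E2. tauto. }
    rewrite E, iint_scal, IHk. unfold w', upd. rewrite Nat.eqb_refl. auto.
Qed.

Lemma slice_iff lam t n' v y : csize lam = S n' -> (1 <= n')%nat -> 0 <= y <= 1 ->
  (in_P lam (upd v (S n') y) /\ upd v (S n') y 1%nat <= t) <->
  Cond lam t n' (mk n' v (upd (fun _ => 0) (S n') y)).
Proof.
  intros Hn Hn1 Hy.
  set (u1 := upd v (S n') y). set (u2 := mk n' v (upd (fun _ => 0) (S n') y)).
  assert (Ag: forall i, (i <= S n')%nat -> u1 i = u2 i).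
  { intros i Hi. unfold u1, u2, upd, mk.
    destruct (Nat.leb i n') eqn:E1; destruct (Nat.eqb i (S n')) eqn:E2; auto.
    - apply Nat.leb_le in E1; apply Nat.eqb_eq in E2; lia.
    - apply Nat.leb_gt in E1; apply Nat.eqb_neq in E2; lia. }
  unfold in_P, Cond, rel. rewrite Hn. split.
  - intros [[H1 H2] H3]. split; [|split].
    + intros _. rewrite <- Ag by lia. auto.
    + intros i Hi. rewrite <- Ag by lia. apply H1; lia.
    + intros i Hi. rewrite <- !Ag by lia. apply H2; lia.
  - intros [H1 [H2 H3]]. split; [split|].
    + intros i Hi. destruct (Nat.eq_dec i (S n')) as [->|].
      * unfold u1, upd. rewrite Nat.eqb_refl. auto.
      * rewrite Ag by lia. apply H2; lia.
    + intros i Hi Hi2. rewrite !Ag by lia. apply H3; lia.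
    + rewrite Ag by lia. apply H1; lia.
Qed.

Lemma slice_GG lam t n' y : csize lam = S n' -> (1 <= n')%nat -> 0 <= y <= 1 ->
  slice_dens lam y t = GG lam t n' y.
Proof.
  intros Hn Hn1 Hy. unfold slice_dens. rewrite Hn. simpl (S n' - 1)%nat. rewrite Nat.sub_0_r.
  replace (GG lam t n' y) with (GG lam t n' (upd (fun _ => 0) (S n') y (S n')))
    by (unfold upd; rewrite Nat.eqb_refl; auto).
  rewrite <- (rep lam t n' (upd (fun _ => 0) (S n') y)).
  f_equal. apply functional_extensionality; intros v. apply ind_iff. apply slice_iff; auto.
Qed.

Lemma dens_slice lam y n' : csize lam = S n' -> dens_XF lam y = slice_dens lam y 1.
Proof.
  intros Hn. unfold dens_XF, slice_dens. f_equal. apply functional_extensionality; intros v.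
  apply ind_iff. split; [|tauto]. intros H. split; auto.
  destruct H as [H1 _]. apply H1. rewrite Hn; lia.
Qed.

Definition clamp x := Rmax 0 (Rmin 1 x).
Lemma clamp_id x : 0 <= x <= 1 -> clamp x = x.
Proof. intros. unfold clamp, Rmax, Rmin; repeat destruct Rle_dec; lra. Qed.
Lemma clamp_range x : 0 <= clamp x <= 1.
Proof. unfold clamp, Rmax, Rmin; repeat destruct Rle_dec; lra. Qed.

Definition Lip (phi : R -> R) := forall x y, Rabs (phi x - phi y) <= Rabs (x - y).

Lemma Lip_cont phi : Lip phi -> forall x, continuous phi x.
Proof.
  intros HL x. apply continuity_pt_filterlim.
  intros eps Heps. exists eps. split; auto.
  intros y [_ Hy]. simpl in *. unfold R_dist in *.
  eapply Rle_lt_trans; [apply HL|]. auto.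
Qed.

Lemma Lip_clamp : Lip clamp.
Proof. intros x y. unfold clamp, Rmax, Rmin; repeat destruct Rle_dec; unfold Rabs; repeat destruct Rcase_abs; lra. Qed.
Lemma Lip_max c : Lip (fun s => Rmax (clamp s) c).
Proof. intros x y. pose proof (Lip_clamp x y). revert H. generalize (clamp x) (clamp y). intros a b.
  unfold Rmax; repeat destruct Rle_dec; unfold Rabs; repeat destruct Rcase_abs; lra. Qed.
Lemma Lip_min c : Lip (fun s => Rmin (clamp s) c).
Proof. intros x y. pose proof (Lip_clamp x y). revert H. generalize (clamp x) (clamp y). intros a b.
  unfold Rmin; repeat destruct Rle_dec; unfold Rabs; repeat destruct Rcase_abs; lra. Qed.
Lemma Lip_const c : Lip (fun _ => c).
Proof. intros x y. rewrite Rminus_diag, Rabs_R0. apply Rabs_pos. Qed.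

Definition Cont (h : R -> R) := forall x, continuous h x.

Lemma Cont_ex h a b : Cont h -> ex_RInt h a b.
Proof. intros Hc. exact (ex_RInt_continuous (V:=R_CompleteNormedModule) h a b (fun z _ => Hc z)). Qed.

Lemma Prim_derive h x : Cont h -> is_derive (fun b => RI h 0 b) x (h x).
Proof. unfold RI.
  intros Hc. apply (is_derive_RInt (V:=R_NormedModule) h (fun b => RInt h 0 b) 0); [|apply Hc].
  apply filter_forall. intros b. exact (RInt_correct (V:=R_CompleteNormedModule) h 0 b (Cont_ex h 0 b Hc)).
Qed.

Lemma Prim_cont h : Cont h -> Cont (fun b => RI h 0 b).
Proof. intros Hc x. apply (ex_derive_continuous (K:=R_AbsRing) (V:=R_NormedModule)). eexists. apply Prim_derive; auto. Qed.

Lemma RInt_prim h a b : Cont h -> RI h a b = RI h 0 b - RI h 0 a.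
Proof.
  intros Hc. rewrite <- (RInt_Chasles_R h 0 a b); try apply Cont_ex; auto. ring.
Qed.

Lemma RInt_bounds_cont h p1 p2 : Cont h -> Lip p1 -> Lip p2 -> Cont (fun s => RI h (p1 s) (p2 s)).
Proof.
  intros Hc L1 L2 x.
  apply (continuous_ext (fun s => RI h 0 (p2 s) - RI h 0 (p1 s))).
  { intros; rewrite (RInt_prim h (p1 x0)); auto. }
  apply (continuous_minus (V:=R_NormedModule)).
  - apply continuous_comp with (f := p2) (g := fun b => RI h 0 b). apply Lip_cont; auto. apply Prim_cont; auto.
  - apply continuous_comp with (f := p1) (g := fun b => RI h 0 b). apply Lip_cont; auto. apply Prim_cont; auto.
Qed.

Definition tk (t:R) (k:nat) := match k with O => t | _ => 1 end.
Fixpoint Hq lam t k : R -> R := match k with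
 | O => fun _ => 1
 | S k' => fun s => if excluded_middle_informative (descent lam (S k'))
     then RI (Hq lam t k') (clamp s) (Rmax (clamp s) (tk t k'))
     else RI (Hq lam t k') 0 (Rmin (clamp s) (tk t k')) end.

Lemma H_cont lam t k : Cont (Hq lam t k).
Proof.
  induction k; simpl.
  - intros x; apply continuous_const.
  - destruct (excluded_middle_informative (descent lam (S k))).
    + apply RInt_bounds_cont; auto. apply Lip_clamp. apply Lip_max.
    + apply RInt_bounds_cont; auto. apply Lip_const. apply Lip_min.
Qed.

Lemma ex0 a b : ex_RInt (fun _ => 0) a b.
Proof. apply ex_RInt_const. Qed.

Lemma piece h c1 c2 phi : Cont h -> 0 <= c1 <= c2 -> c2 <= 1 ->
  (forall y, c1 < y < c2 -> phi y = h y) -> (forall y, 0 < y < c1 -> phi y = 0) ->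
  (forall y, c2 < y < 1 -> phi y = 0) -> Defs.RInt phi 0 1 = RI h c1 c2.
Proof.
  intros Hc Hc1 Hc2 E1 E2 E3.
  assert (X1: ex_RInt phi 0 c1).
  { apply (ex_RInt_ext_R (fun _ => 0)); [|apply ex0]. intros y Hy.
    rewrite Rmin_left, Rmax_right in Hy by lra. symmetry; apply E2; lra. }
  assert (X2: ex_RInt phi c1 c2).
  { apply (ex_RInt_ext_R h); [|apply Cont_ex; auto]. intros y Hy.
    rewrite Rmin_left, Rmax_right in Hy by lra. symmetry; apply E1; lra. }
  assert (X3: ex_RInt phi c2 1).
  { apply (ex_RInt_ext_R (fun _ => 0)); [|apply ex0]. intros y Hy.
    rewrite Rmin_left, Rmax_right in Hy by lra. symmetry; apply E3; lra. }
  assert (X12 := ex_RInt_Chasles _ _ _ _ X1 X2).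
  rewrite DR_ex by (eapply ex_RInt_Chasles; eauto).
  rewrite <- (RInt_Chasles_R phi 0 c2 1) by auto.
  rewrite <- (RInt_Chasles_R phi 0 c1 c2) by auto.
  rewrite (RInt_ext_R phi (fun _ => 0) 0 c1), (RInt_ext_R phi (fun _ => 0) c2 1), (RInt_ext_R phi h c1 c2).
  - rewrite !RInt_const_R. ring.
  - intros y Hy. rewrite Rmin_left, Rmax_right in Hy by lra. apply E1; lra.
  - intros y Hy. rewrite Rmin_left, Rmax_right in Hy by lra. apply E3; lra.
  - intros y Hy. rewrite Rmin_left, Rmax_right in Hy by lra. apply E2; lra.
Qed.

Lemma GG_H lam t k : 0 <= t <= 1 -> forall s, 0 <= s <= 1 -> GG lam t k s = Hq lam t k s.
Proof.
  intros Ht. induction k; intros s Hs; simpl; auto.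
  rewrite clamp_id by auto.
  assert (Htk: 0 <= tk t k <= 1) by (destruct k; simpl; lra).
  unfold facP, rel.
  destruct (excluded_middle_informative (descent lam (S k))) as [D|D].
  - apply piece.
    + apply H_cont.
    + split; auto. lra. apply Rmax_l.
    + apply Rmax_lub; lra.
    + intros y Hy. rewrite IHk by (split; [lra|]; apply Rlt_le; eapply Rlt_le_trans; [apply Hy|apply Rmax_lub; lra]).
      replace (Defs.ind _) with 1. ring.
      unfold Defs.ind; destruct (excluded_middle_informative _) as [|n]; auto. exfalso; apply n.
      assert (y <= 1) by (apply Rlt_le; eapply Rlt_le_trans; [apply Hy|apply Rmax_lub; lra]).
      split; [|split; [split; lra|split; [intros; lra| tauto]]].
      intros ->. simpl in Hy. unfold Rmax in Hy. destruct (Rle_dec s t); lra.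
    + intros y Hy. replace (Defs.ind _) with 0. ring.
      unfold Defs.ind; destruct (excluded_middle_informative _) as [[_ [_ [X _]]]|n]; auto.
      specialize (X D). lra.
    + intros y Hy. replace (Defs.ind _) with 0. ring.
      unfold Defs.ind; destruct (excluded_middle_informative _) as [[X _]|n]; auto.
      destruct k; simpl in Hy.
      * specialize (X eq_refl). unfold Rmax in Hy. destruct (Rle_dec s t); lra.
      * unfold Rmax in Hy. destruct (Rle_dec s 1); lra.
  - apply piece.
    + apply H_cont.
    + split; [lra|]. apply Rmin_glb; lra.
    + apply Rle_trans with s; [apply Rmin_l|lra].
    + intros y Hy. assert (y < s /\ y < tk t k) as [Y1 Y2].
      { unfold Rmin in Hy; destruct (Rle_dec s (tk t k)); split; lra. }
      rewrite IHk by lra.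
      replace (Defs.ind _) with 1. ring.
      unfold Defs.ind; destruct (excluded_middle_informative _) as [|n]; auto. exfalso; apply n.
      split; [|split; [split; lra|split; [tauto|intros; lra]]].
      intros ->. simpl in Y2. lra.
    + intros y Hy. lra.
    + intros y Hy. replace (Defs.ind _) with 0. ring.
      unfold Defs.ind; destruct (excluded_middle_informative _) as [[X [_ [_ Y]]]|n]; auto.
      specialize (Y D).
      unfold Rmin in Hy; destruct (Rle_dec s (tk t k)).
      * lra.
      * destruct k; simpl in *.
        -- specialize (X eq_refl). lra.
        -- lra.
Qed.

Lemma Cont_mult f g : Cont f -> Cont g -> Cont (fun x => f x * g x).
Proof. intros Hf Hg x. apply (continuous_mult (K:=R_AbsRing)); auto. Qed.
Lemma Cont_minus f g : Cont f -> Cont g -> Cont (fun x => f x - g x).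
Proof. intros Hf Hg x. apply (continuous_minus (V:=R_NormedModule)); auto. Qed.
Lemma Cont_id : Cont (fun x => x).
Proof. intros x; apply continuous_id. Qed.
Lemma Cont_const c : Cont (fun _ => c).
Proof. intros x; apply continuous_const. Qed.
Lemma Cont_pow f n : Cont f -> Cont (fun x => f x ^ n).
Proof. intros Hf. induction n; simpl. apply Cont_const. apply Cont_mult; auto. Qed.

Lemma deriv_mult (f g : R -> R) (x df dg : R) : is_derive f x df -> is_derive g x dg ->
  is_derive (fun y => f y * g y) x (df * g x + f x * dg).
Proof. intros H1 H2. apply is_derive_Reals. apply (derivable_pt_lim_mult f g); apply is_derive_Reals; auto. Qed.
Lemma deriv_minus (f g : R -> R) (x df dg : R) : is_derive f x df -> is_derive g x dg ->
  is_derive (fun y => f y - g y) x (df - dg).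
Proof. intros H1 H2. apply is_derive_Reals. apply (derivable_pt_lim_minus f g); apply is_derive_Reals; auto. Qed.
Lemma deriv_const (c x : R) : is_derive (fun _ => c) x 0.
Proof. apply is_derive_Reals. apply derivable_pt_lim_const. Qed.
Lemma deriv_id x : is_derive (fun y => y) x 1.
Proof. apply is_derive_Reals. apply derivable_pt_lim_id. Qed.
Lemma deriv_ext (f g : R -> R) (x l : R) : (forall y, f y = g y) -> is_derive f x l -> is_derive g x l.
Proof. intros E H. apply is_derive_Reals. apply is_derive_Reals in H.
  replace g with f; auto. apply functional_extensionality; auto. Qed.
Lemma deriv_val (f : R -> R) (x l l' : R) : l = l' -> is_derive f x l -> is_derive f x l'.
Proof. intros ->; auto. Qed.
Lemma deriv_cont (f : R -> R) : (forall x, exists l, is_derive f x l) -> Cont f.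
Proof. intros H x. destruct (H x) as [l Hl].
  apply (ex_derive_continuous (K:=R_AbsRing) (V:=R_NormedModule)). exists l; auto. Qed.

Definition Up h s := RI h 0 (clamp s).
Fixpoint Upn m h := match m with O => h | S m' => Up (Upn m' h) end.

Lemma Up_cont h : Cont h -> Cont (Up h).
Proof. intros Hc. unfold Up. apply RInt_bounds_cont; auto. apply Lip_const. apply Lip_clamp. Qed.
Lemma Upn_cont m h : Cont h -> Cont (Upn m h).
Proof. intros Hc; induction m; simpl; auto. apply Up_cont; auto. Qed.

Definition K j h s := RI (fun z => h z * (s - z)^j) 0 s.

Lemma K0_deriv h s : Cont h -> is_derive (K 0 h) s (h s).
Proof.
  intros Hc. apply (deriv_ext (fun b => RI (fun z => h z * 1) 0 b)). { intros; reflexivity. }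
  apply (deriv_val _ s (h s * 1)). ring. apply (Prim_derive (fun z => h z * 1) s). apply Cont_mult; auto. apply Cont_const.
Qed.

Lemma K_split j h s : Cont h -> K (S j) h s = s * K j h s - K j (fun z => z * h z) s.
Proof.
  intros Hc. unfold K.
  assert (C1: Cont (fun z => h z * (s - z)^j)) by (apply Cont_mult; auto; apply Cont_pow; apply Cont_minus; [apply Cont_const|apply Cont_id]).
  assert (C2: Cont (fun z => z * h z * (s - z)^j)) by (apply Cont_mult; [apply Cont_mult; auto; apply Cont_id|]; apply Cont_pow; apply Cont_minus; [apply Cont_const|apply Cont_id]).
  rewrite <- RInt_scal_R by (apply Cont_ex; auto).
  rewrite <- RInt_minus_R by (try apply ex_RInt_scal_R; apply Cont_ex; auto).
  apply RInt_ext_R. intros; simpl; ring.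
Qed.

Lemma K_deriv j : forall h, Cont h -> forall s, is_derive (K (S j) h) s (INR (S j) * K j h s).
Proof.
  induction j; intros h Hc s.
  - apply (deriv_ext (fun s => s * K 0 h s - K 0 (fun z => z * h z) s)).
    { intros y; rewrite (K_split 0 h y Hc); auto. }
    eapply deriv_val; [|apply deriv_minus; [apply deriv_mult; [apply deriv_id|apply K0_deriv; auto]|apply K0_deriv]].
    simpl; ring. apply Cont_mult; auto; apply Cont_id.
  - apply (deriv_ext (fun s => s * K (S j) h s - K (S j) (fun z => z * h z) s)).
    { intros y; rewrite (K_split (S j) h y Hc); auto. }
    eapply deriv_val; [|apply deriv_minus; [apply deriv_mult; [apply deriv_id|apply IHj; auto]|apply IHj]].
    2: apply Cont_mult; auto; apply Cont_id.
    rewrite (K_split j h s Hc). rewrite !S_INR. ring.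
Qed.

Lemma K_cont j h : Cont h -> Cont (K j h).
Proof.
  intros Hc. apply deriv_cont. intros x. destruct j.
  - eexists; apply K0_deriv; auto.
  - eexists; apply K_deriv; auto.
Qed.

Lemma K_at0 j h : K j h 0 = 0.
Proof. unfold K. apply RInt_point_R. Qed.

Lemma cauchy j h : Cont h -> forall s, 0 <= s <= 1 -> Upn (S j) h s = K j h s / INR (Factorial.fact j).
Proof.
  intros Hc. induction j; intros s Hs.
  - simpl. unfold Up. rewrite clamp_id by auto. unfold K. simpl.
    rewrite Rdiv_1_r. apply RInt_ext_R. intros; ring.
  - change (Upn (S (S j)) h s) with (Up (Upn (S j) h) s). unfold Up. rewrite clamp_id by auto.
    rewrite (RInt_ext_R _ (fun z => / INR (Factorial.fact j) * K j h z)).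
    2: { intros x Hx. rewrite Rmin_left, Rmax_right in Hx by lra. rewrite IHj by lra. unfold Rdiv; ring. }
    rewrite RInt_scal_R by (apply Cont_ex; apply K_cont; auto).
    assert (E: RI (K j h) 0 s = K (S j) h s / INR (S j)).
    { unfold RI. apply is_RInt_unique.
      apply (is_RInt_ext (fun x => K j h x)). { intros; reflexivity. }
      replace (K (S j) h s / INR (S j)) with (minus ((fun x => K (S j) h x / INR (S j)) s) ((fun x => K (S j) h x / INR (S j)) 0)).
      2: { cbv beta. rewrite K_at0. unfold minus, plus, opp; cbn -[INR K]. field. apply not_0_INR; lia. }
      apply (is_RInt_derive (V:=R_CompleteNormedModule) (fun x => K (S j) h x / INR (S j)) (K j h)).
      - intros x _. eapply deriv_val; [|apply (deriv_mult _ (fun _ => / INR (S j))); [apply K_deriv; auto|apply deriv_const]].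
        field. apply not_0_INR; lia.
      - intros x _. apply K_cont; auto. }
    rewrite E. rewrite fact_simpl, mult_INR. field. split; apply not_0_INR; try lia. apply Factorial.fact_neq_0.
Qed.



Lemma pow_le1 s m : 0 <= s <= 1 -> s ^ m <= 1.
Proof. intros Hs. induction m; simpl; [lra|]. rewrite <- (Rmult_1_r 1). apply Rmult_le_compat; try lra. apply pow_le; lra. Qed.

Lemma pow_le_self s m : 0 <= s <= 1 -> (1 <= m)%nat -> s ^ m <= s.
Proof.
  intros Hs Hm. destruct m; [lia|]. change (s ^ S m) with (s * s ^ m). pose proof (pow_le1 s m Hs). nra.
Qed.

Lemma poly1 A B s p : 0 <= B -> B <= s * A -> A - B = 1 - s -> 0 <= s <= 1 -> 0 <= A ->
  A ^ (S p) - B ^ (S p) <= (1 - s ^ (S p)) * A ^ p.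
Proof.
  intros HB HBA HAB Hs HA. induction p.
  - simpl. lra.
  - assert (Hp: B ^ (S p) <= (s * A) ^ (S p)) by (apply pow_incr; lra).
    rewrite Rpow_mult_distr in Hp.
    replace (A ^ S (S p) - B ^ S (S p)) with (A * (A ^ S p - B ^ S p) + B ^ S p * (A - B)) by (simpl; ring).
    apply Rle_trans with (A * ((1 - s ^ S p) * A ^ p) + s ^ S p * A ^ S p * (1 - s)).
    + apply Rplus_le_compat. apply Rmult_le_compat_l; auto.
      rewrite HAB. apply Rmult_le_compat_r; lra.
    + simpl. lra.
Qed.

Lemma polyA z s m : 0 <= z <= s -> s <= 1 -> (1 <= m)%nat ->
  (1 - z) ^ m - (s - z) ^ m <= (1 - s ^ m) * (1 - z) ^ (m - 1).
Proof.
  intros Hz Hs Hm. destruct m; [lia|]. replace (S m - 1)%nat with m by lia.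
  apply poly1; try lra. nra.
Qed.

Lemma polyB z s m : 0 <= s <= z -> z <= 1 -> (1 <= m)%nat ->
  (1 - z) ^ m <= (1 - s ^ m) * (1 - z) ^ (m - 1).
Proof.
  intros Hz Hs Hm. destruct m; [lia|]. replace (S m - 1)%nat with m by lia.
  simpl. apply Rmult_le_compat_r. apply pow_le; lra.
  pose proof (pow_le_self s (S m)). simpl in H. assert (s * s^m <= s) by (apply H; lra || lia). lra.
Qed.

Lemma polyC z s m : 0 <= z <= s -> s <= 1 -> (s - z) ^ m <= s ^ m * (1 - z) ^ m.
Proof.
  intros. rewrite <- Rpow_mult_distr. apply pow_incr. nra.
Qed.

Lemma RI_le f g a b : a <= b -> ex_RInt f a b -> ex_RInt g a b -> (forall x, a < x < b -> f x <= g x) -> RI f a b <= RI g a b.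
Proof. intros. unfold RI. apply RInt_le; auto. Qed.
Lemma RI_ge0 f a b : a <= b -> ex_RInt f a b -> (forall x, a < x < b -> 0 <= f x) -> 0 <= RI f a b.
Proof. intros. unfold RI. apply RInt_ge_0; auto. Qed.

Ltac cont := repeat match goal with
  | H : Cont ?h |- Cont ?h => exact H
  | H : Cont ?h |- Cont (fun x => ?h x) => exact H
  | |- Cont (fun x => x) => apply Cont_id
  | |- Cont (fun x => ?c) => apply Cont_const
  | |- Cont (fun x => @?a x * @?b x) => apply (Cont_mult a b)
  | |- Cont (fun x => @?a x - @?b x) => apply (Cont_minus a b)
  | |- Cont (fun x => @?a x ^ ?n) => apply (Cont_pow a n)
  end.
Ltac cex := apply Cont_ex; cont.

Lemma KB h m s : Cont h -> (forall z, 0 <= z <= 1 -> 0 <= h z) -> (1 <= m)%nat -> 0 <= s <= 1 ->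
  (1 - s^m) * RI (fun z => h z * (1 - z)^m) 0 1 <= K m h 1 - K m h s <=
  (1 - s^m) * RI (fun z => h z * (1 - z)^(m - 1)) 0 1.
Proof.
  intros Hc Hp Hm Hs.
  set (fL := fun z => h z * (1 - z)^m). set (fU := fun z => h z * (1 - z)^(m-1)).
  assert (CL: Cont fL) by (unfold fL; cont). assert (CU: Cont fU) by (unfold fU; cont).
  assert (HK1: K m h 1 = RI fL 0 1) by reflexivity.
  assert (EL: RI fL 0 1 = RI fL 0 s + RI fL s 1) by (symmetry; apply RInt_Chasles_R; apply Cont_ex; auto).
  assert (EU: RI fU 0 1 = RI fU 0 s + RI fU s 1) by (symmetry; apply RInt_Chasles_R; apply Cont_ex; auto).
  assert (Csz: Cont (fun z => h z * (s - z)^m)) by cont.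
  assert (Hsm: 0 <= s^m <= 1) by (split; [apply pow_le; lra|apply pow_le1; auto]).
  split.
  - assert (A1: K m h s <= s^m * RI fL 0 s).
    { unfold K. rewrite <- RInt_scal_R by (apply Cont_ex; auto).
      apply RI_le; try lra; try (apply Cont_ex; cont). unfold fL.
      intros z Hz. rewrite <- Rmult_assoc, (Rmult_comm (s^m)), Rmult_assoc.
      apply Rmult_le_compat_l. apply Hp; lra. apply polyC; lra. }
    assert (A2: 0 <= RI fL s 1).
    { apply RI_ge0; try lra. apply Cont_ex; auto. intros z Hz. unfold fL.
      apply Rmult_le_pos. apply Hp; lra. apply pow_le; lra. }
    assert (A3: 0 <= RI fL 0 s).
    { apply RI_ge0; try lra. apply Cont_ex; auto. intros z Hz. unfold fL.
      apply Rmult_le_pos. apply Hp; lra. apply pow_le; lra. }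
    rewrite HK1. rewrite EL. nra.
  - assert (B1: RI fL 0 s - K m h s <= (1 - s^m) * RI fU 0 s).
    { unfold K. rewrite <- RInt_minus_R by (apply Cont_ex; auto).
      rewrite <- RInt_scal_R by (apply Cont_ex; auto).
      apply RI_le; try lra; try (apply Cont_ex; cont). unfold fL, fU.
      intros z Hz. assert (0 <= h z) by (apply Hp; lra).
      pose proof (polyA z s m ltac:(lra) ltac:(lra) Hm). nra. }
    assert (B2: RI fL s 1 <= (1 - s^m) * RI fU s 1).
    { rewrite <- RInt_scal_R by (apply Cont_ex; auto).
      apply RI_le; try lra; try (apply Cont_ex; cont). unfold fL, fU.
      intros z Hz. assert (0 <= h z) by (apply Hp; lra).
      pose proof (polyB z s m ltac:(lra) ltac:(lra) Hm). nra. }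
    rewrite HK1, EL, EU. nra.
Qed.

Definition X m h s := RI (Upn m h) s 1.

Lemma X_K m h s : Cont h -> 0 <= s <= 1 -> X m h s = (K m h 1 - K m h s) / INR (Factorial.fact m).
Proof.
  intros Hc Hs. unfold X.
  assert (C: Cont (Upn m h)) by (apply Upn_cont; auto).
  assert (E: RI (Upn m h) s 1 = RI (Upn m h) 0 1 - RI (Upn m h) 0 s).
  { rewrite <- (RInt_Chasles_R _ 0 s 1) by (apply Cont_ex; auto). ring. }
  rewrite E.
  replace (RI (Upn m h) 0 1) with (Upn (S m) h 1) by (simpl; unfold Up; rewrite clamp_id by lra; auto).
  replace (RI (Upn m h) 0 s) with (Upn (S m) h s) by (simpl; unfold Up; rewrite clamp_id by lra; auto).
  rewrite !cauchy by (auto; lra). field. apply INR_fact_neq_0.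
Qed.

Lemma psi_deriv (m : nat) (z : R) : (1 <= m)%nat -> is_derive (fun z => - z * (1 - z)^m) z
   (INR m * (1 - z)^(m-1) - (INR m + 1) * (1 - z)^m).
Proof.
  intros Hm. auto_derive; auto. rewrite <- Nat.sub_1_r.
  match goal with |- ?a = ?b => change (@eq R a b) end.
  destruct m; [lia|]. replace (S m - 1)%nat with m by lia. rewrite S_INR. simpl. replace (1 + - z) with (1 - z) by ring. ring.
Qed.

Lemma phi_int m : (1 <= m)%nat -> RI (fun z => INR m * (1 - z)^(m-1) - (INR m + 1) * (1 - z)^m) 0 1 = 0.
Proof.
  intros Hm. unfold RI.
  assert (Hi: is_RInt (fun z => INR m * (1 - z)^(m-1) - (INR m + 1) * (1 - z)^m) 0 1
     (minus ((fun z => - z * (1 - z)^m) 1) ((fun z => - z * (1 - z)^m) 0))).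
  { apply (is_RInt_derive (V:=R_CompleteNormedModule) (fun z => - z * (1 - z)^m)).
    - intros x _. apply psi_deriv; auto.
    - intros x _. apply Cont_minus; [apply Cont_mult|apply Cont_mult]; cont. }
  apply (is_RInt_unique (V:=R_CompleteNormedModule)) in Hi. rewrite Hi.
  destruct m; [lia|]. unfold minus, plus, opp; simpl. ring.
Qed.

Section Core.
Variables (f g : R -> R) (m : nat).
Hypothesis Cf : Cont f.
Hypothesis Cg : Cont g.
Hypothesis Hfg : forall z, 0 <= z <= 1 -> 0 <= f z <= g z.
Hypothesis Hmono : forall z1 z2, 0 <= z1 -> z1 <= z2 -> z2 <= 1 -> g z2 <= g z1.
Hypothesis Hm : (1 <= m)%nat.

Let FL := RI (fun z => f z * (1 - z)^m) 0 1.
Let FU := RI (fun z => f z * (1 - z)^(m-1)) 0 1.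
Let GL := RI (fun z => g z * (1 - z)^m) 0 1.
Let GU := RI (fun z => g z * (1 - z)^(m-1)) 0 1.

Lemma nn_int (h : R -> R) j : Cont h -> (forall z, 0 <= z <= 1 -> 0 <= h z) -> 0 <= RI (fun z => h z * (1 - z)^j) 0 1.
Proof. intros Ch Hh. apply RI_ge0; try lra. cex. intros z Hz. apply Rmult_le_pos. apply Hh; lra. apply pow_le; lra. Qed.

Lemma core_a s : 0 <= s <= 1 -> GL * X m f s <= FU * X m g s /\ FL * X m g s <= GU * X m f s.
Proof.
  intros Hs. rewrite !X_K by auto.
  assert (Pf: forall z, 0 <= z <= 1 -> 0 <= f z) by (intros; apply Hfg; auto).
  assert (Pg: forall z, 0 <= z <= 1 -> 0 <= g z) by (intros z Hz; specialize (Hfg z Hz); lra).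
  destruct (KB f m s Cf Pf Hm Hs) as [f1 f2]. destruct (KB g m s Cg Pg Hm Hs) as [g1 g2].
  fold FL FU in f1, f2. fold GL GU in g1, g2.
  assert (0 <= FL) by (apply nn_int; auto). assert (0 <= FU) by (apply nn_int; auto).
  assert (0 <= GL) by (apply nn_int; auto). assert (0 <= GU) by (apply nn_int; auto).
  assert (0 <= 1 - s^m) by (pose proof (pow_le1 s m Hs); lra).
  assert (Fp := INR_fact_lt_0 m). set (c := INR (Factorial.fact m)) in *.
  set (xf := K m f 1 - K m f s) in *. set (xg := K m g 1 - K m g s) in *.
  unfold Rdiv. split.
  - apply Rmult_le_reg_r with c; auto. rewrite !Rmult_assoc, !Rinv_l by lra. rewrite !Rmult_1_r.
    apply Rle_trans with (GL * ((1 - s^m) * FU)). apply Rmult_le_compat_l; lra.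
    replace (GL * ((1 - s^m) * FU)) with (FU * ((1 - s^m) * GL)) by ring.
    apply Rmult_le_compat_l; lra.
  - apply Rmult_le_reg_r with c; auto. rewrite !Rmult_assoc, !Rinv_l by lra. rewrite !Rmult_1_r.
    apply Rle_trans with (FL * ((1 - s^m) * GU)). apply Rmult_le_compat_l; lra.
    replace (FL * ((1 - s^m) * GU)) with (GU * ((1 - s^m) * FL)) by ring.
    apply Rmult_le_compat_l; lra.
Qed.

Lemma core_b s : 0 <= s <= 1 -> 0 <= X m g s /\ X m g s <= GU / INR (Factorial.fact m).
Proof.
  intros Hs. rewrite !X_K by auto.
  assert (Pg: forall z, 0 <= z <= 1 -> 0 <= g z) by (intros z Hz; specialize (Hfg z Hz); lra).
  destruct (KB g m s Cg Pg Hm Hs) as [g1 g2]. fold GL GU in g1, g2.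
  assert (0 <= GL) by (apply nn_int; auto). assert (0 <= GU) by (apply nn_int; auto).
  assert (0 <= s^m) by (apply pow_le; lra). assert (s^m <= 1) by (apply pow_le1; auto).
  assert (Fp := INR_fact_lt_0 m). set (c := INR (Factorial.fact m)) in *.
  split.
  - apply Rmult_le_pos; [|left; apply Rinv_0_lt_compat; auto].
    assert (0 <= (1 - s^m) * GL) by (apply Rmult_le_pos; lra). lra.
  - unfold Rdiv. apply Rmult_le_compat_r. left; apply Rinv_0_lt_compat; auto.
    assert ((1 - s^m) * GU <= 1 * GU) by (apply Rmult_le_compat_r; lra). lra.
Qed.

Lemma cheb : INR m * GU <= (INR m + 1) * GL.
Proof.
  set (z0 := / (INR m + 1)).
  assert (Hm0: 1 <= INR m) by (apply (le_INR 1); auto).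
  assert (Hz0: 0 < z0 < 1).
  { unfold z0. split. apply Rinv_0_lt_compat; lra.
    rewrite <- Rinv_1. apply Rinv_lt_contravar; lra. }
  set (phi := fun z => INR m * (1 - z)^(m-1) - (INR m + 1) * (1 - z)^m).
  assert (E: INR m * GU - (INR m + 1) * GL = RI (fun z => g z * phi z) 0 1).
  { unfold GU, GL, phi. rewrite <- !RInt_scal_R by cex. rewrite <- RInt_minus_R by (apply ex_RInt_scal_R; cex).
    apply RInt_ext_R; intros; ring. }
  assert (I: RI (fun z => g z * phi z) 0 1 <= RI (fun z => g z0 * phi z) 0 1).
  { apply RI_le; try lra; try (unfold phi; cex).
    intros z Hz.
    assert (Ephi: phi z = (1 - z)^(m-1) * ((INR m + 1) * z - 1)).
    { unfold phi. destruct m; [lia|]. replace (S n - 1)%nat with n by lia. simpl. ring. }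
    assert (P: 0 <= (1 - z)^(m-1)) by (apply pow_le; lra).
    rewrite Ephi.
    destruct (Rle_dec z z0) as [Hle|Hgt].
    - assert (g z0 <= g z) by (apply Hmono; lra).
      assert ((INR m + 1) * z - 1 <= 0).
      { unfold z0 in Hle. apply Rmult_le_compat_l with (r := INR m + 1) in Hle; [|lra].
        rewrite Rinv_r in Hle by lra. lra. }
      assert (0 <= (g z - g z0) * (1 - z)^(m-1)) by (apply Rmult_le_pos; lra).
      nra.
    - assert (g z <= g z0) by (apply Hmono; lra).
      assert ((INR m + 1) * z - 1 >= 0).
      { assert (z0 < z) by lra. unfold z0 in H0. apply Rmult_lt_compat_l with (r := INR m + 1) in H0; [|lra].
        rewrite Rinv_r in H0 by lra. lra. }
      assert (0 <= (g z0 - g z) * (1 - z)^(m-1)) by (apply Rmult_le_pos; lra).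
      nra. }
  rewrite <- E in I. rewrite RInt_scal_R in I by (unfold phi; cex).
  unfold phi in I. rewrite phi_int in I by auto. lra.
Qed.

Lemma core_c : 0 < GU -> 0 < GL /\ FU / GL - FL / GU <= 2 / INR m.
Proof.
  intros HGU.
  assert (Hm0: 1 <= INR m) by (apply (le_INR 1); auto).
  pose proof cheb as Ch.
  assert (Pf: forall z, 0 <= z <= 1 -> 0 <= f z) by (intros; apply Hfg; auto).
  assert (0 <= FL) by (apply nn_int; auto).
  assert (HGL: 0 < GL).
  { assert (0 < INR m * GU) by (apply Rmult_lt_0_compat; lra).
    destruct (Rle_dec GL 0) as [Hn|Hn]; [|lra].
    assert ((INR m + 1) * GL <= 0) by (rewrite Rmult_comm; apply Rmult_le_0_r; lra).
    lra. }
  split; auto.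
  assert (D1: FL <= GL).
  { apply RI_le; try lra; try cex. intros z Hz. apply Rmult_le_compat_r. apply pow_le; lra. apply Hfg; lra. }
  assert (D2: GL <= GU).
  { apply RI_le; try lra; try cex. intros z Hz. apply Rmult_le_compat_l. pose proof (Hfg z ltac:(lra)); lra.
    destruct m; [lia|]. replace (S n - 1)%nat with n by lia. simpl.
    assert (0 <= (1 - z)^n) by (apply pow_le; lra). nra. }
  assert (D3: FU - FL <= GU - GL).
  { unfold FU, FL, GU, GL. rewrite <- !RInt_minus_R by cex.
    apply RI_le; try lra; try (apply Cont_ex; cont).
    intros z Hz. destruct m; [lia|]. replace (S n - 1)%nat with n by lia. simpl.
    assert (0 <= (1 - z)^n) by (apply pow_le; lra).
    assert (0 <= z * (1 - z)^n) by (apply Rmult_le_pos; lra).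
    assert (0 <= f z <= g z) by (apply Hfg; lra).
    assert (0 <= (g z - f z) * (z * (1 - z)^n)) by (apply Rmult_le_pos; lra).
    match goal with |- ?a <= ?b => replace b with (a + (g z - f z) * (z * (1 - z)^n)) by ring end.
    lra. }
  assert (Key: FU * GU - FL * GL <= 2 * GU * GL / INR m).
  { apply Rle_trans with (2 * GU * (GU - GL)).
    - assert (FU * GU <= (FL + (GU - GL)) * GU) by (apply Rmult_le_compat_r; lra).
      assert (FL * (GU - GL) <= GU * (GU - GL)) by (apply Rmult_le_compat_r; lra).
      lra.
    - apply Rmult_le_reg_r with (INR m); [lra|].
      replace (2 * GU * GL / INR m * INR m) with (2 * GU * GL) by (field; lra).
      assert (INR m * (GU - GL) <= GL) by lra.
      assert (2 * GU * (INR m * (GU - GL)) <= 2 * GU * GL) by (apply Rmult_le_compat_l; lra).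
      lra. }
  assert (E: FU / GL - FL / GU = (FU * GU - FL * GL) / (GL * GU)) by (field; lra).
  assert (P: 0 < GL * GU) by (apply Rmult_lt_0_compat; lra).
  rewrite E. apply Rmult_le_reg_r with (GL * GU); [exact P|].
  replace ((FU * GU - FL * GL) / (GL * GU) * (GL * GU)) with (FU * GU - FL * GL) by (field; lra).
  apply Rle_trans with (1 := Key). right. field. lra.
Qed.

End Core.

Lemma Rmax_c1 s : Rmax (clamp s) 1 = 1.
Proof. pose proof (clamp_range s). unfold Rmax; destruct Rle_dec; lra. Qed.
Lemma Rmin_c1 s : Rmin (clamp s) 1 = clamp s.
Proof. pose proof (clamp_range s). unfold Rmin; destruct Rle_dec; lra. Qed.

Lemma H_S lam tau k s : (1 <= k)%nat -> Hq lam tau (S k) s =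
  if excluded_middle_informative (descent lam (S k)) then RI (Hq lam tau k) (clamp s) 1
  else RI (Hq lam tau k) 0 (clamp s).
Proof.
  intros Hk. simpl. destruct k; [lia|]. simpl tk. rewrite Rmax_c1, Rmin_c1. auto.
Qed.

Lemma H_nonneg lam tau k s : 0 <= tau <= 1 -> 0 <= Hq lam tau k s.
Proof.
  intros Ht. revert s. induction k; intros s; simpl; [lra|].
  pose proof (clamp_range s).
  assert (0 <= tk tau k <= 1) by (destruct k; simpl; lra).
  destruct (excluded_middle_informative _).
  - apply RI_ge0. apply Rmax_l. apply Cont_ex, H_cont. intros; auto.
  - apply RI_ge0. apply Rmin_glb; lra. apply Cont_ex, H_cont. intros; auto.
Qed.

Lemma H_le lam t k s : 0 <= t <= 1 -> Hq lam t k s <= Hq lam 1 k s.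
Proof.
  intros Ht. revert s. induction k; intros s; [simpl; lra|].
  destruct k.
  - simpl. pose proof (clamp_range s).
    destruct (excluded_middle_informative _); rewrite !RInt_const_R.
    + unfold Rmax; repeat destruct Rle_dec; lra.
    + unfold Rmin; repeat destruct Rle_dec; lra.
  - rewrite !H_S by lia. pose proof (clamp_range s).
    destruct (excluded_middle_informative _); apply RI_le; try lra; try (apply Cont_ex, H_cont); intros; apply IHk.
Qed.

Lemma prop lam t1 t2 b al be : (1 <= b)%nat ->
  (forall s, 0 <= s <= 1 -> al * Hq lam t1 b s <= be * Hq lam t2 b s) ->
  forall k, (b <= k)%nat -> forall s, 0 <= s <= 1 -> al * Hq lam t1 k s <= be * Hq lam t2 k s.
Proof.
  intros Hb Hbase k Hk. induction Hk; auto.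
  intros s Hs. rewrite !H_S by lia. rewrite clamp_id by auto.
  destruct (excluded_middle_informative _).
  - rewrite <- !RInt_scal_R by (apply Cont_ex, H_cont).
    apply RI_le; try lra; try (apply ex_RInt_scal_R; apply Cont_ex, H_cont).
    intros; apply IHHk; lra.
  - rewrite <- !RInt_scal_R by (apply Cont_ex, H_cont).
    apply RI_le; try lra; try (apply ex_RInt_scal_R; apply Cont_ex, H_cont).
    intros; apply IHHk; lra.
Qed.

Definition refl (h : R -> R) := fun z => h (1 - z).

Lemma refl_cont h : Cont h -> Cont (refl h).
Proof.
  intros Hc x. unfold refl. apply (continuous_comp (fun z => 1 - z) h).
  apply (Cont_minus (fun _ => 1) (fun z => z)); [apply Cont_const|apply Cont_id]. apply Hc.
Qed.

Lemma RI_refl F a b : Cont F -> RI (fun z => F (1 - z)) a b = RI F (1 - b) (1 - a).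
Proof.
  intros Hc.
  assert (Hex: ex_RInt F (-1 * a + 1) (-1 * b + 1)).
  { replace (-1 * a + 1) with (1 - a) by ring. replace (-1 * b + 1) with (1 - b) by ring.
    apply Cont_ex; auto. }
  pose proof (RInt_comp_lin (V:=R_CompleteNormedModule) F (-1) 1 a b Hex) as E.
  replace (-1 * a + 1) with (1 - a) in E by ring. replace (-1 * b + 1) with (1 - b) in E by ring.
  assert (E2: RI (fun y => -1 * F (1 - y)) a b = RI F (1 - a) (1 - b)).
  { unfold RI. rewrite <- E. apply RInt_ext. intros x _. unfold scal; simpl; unfold mult; simpl.
    f_equal. f_equal. ring. }
  rewrite RInt_scal_R in E2.
  2: { apply (ex_RInt_ext_R (refl F)). intros; reflexivity. apply Cont_ex, refl_cont; auto. }
  assert (C: RI F (1 - a) (1 - b) + RI F (1 - b) (1 - a) = RI F (1 - a) (1 - a))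
    by (apply RInt_Chasles_R; apply Cont_ex; auto).
  rewrite RInt_point_R in C. lra.
Qed.

Lemma H1_S lam k s : Hq lam 1 (S k) s =
  if excluded_middle_informative (descent lam (S k)) then RI (Hq lam 1 k) (clamp s) 1
  else RI (Hq lam 1 k) 0 (clamp s).
Proof. simpl. assert (tk 1 k = 1) by (destruct k; reflexivity). rewrite H, Rmax_c1, Rmin_c1. auto. Qed.

Lemma run_up lam tau a b : (2 <= a)%nat -> (forall i, (a <= i < b)%nat -> ~ descent lam i) ->
  forall j, (j <= b - a)%nat -> forall s, Hq lam tau (a - 1 + j) s = Upn j (Hq lam tau (a - 1)) s.
Proof.
  intros Ha Hd j. induction j; intros Hj s.
  - rewrite Nat.add_0_r. reflexivity.
  - replace (a - 1 + S j)%nat with (S (a - 1 + j)) by lia.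
    rewrite H_S by lia. destruct (excluded_middle_informative _) as [D|D].
    + exfalso. apply (Hd (S (a - 1 + j))); auto. lia.
    + simpl. unfold Up. f_equal. apply functional_extensionality; intros z. apply IHj; lia.
Qed.

Lemma run_dn lam tau a b : (2 <= a)%nat -> (forall i, (a <= i < b)%nat -> descent lam i) ->
  forall j, (j <= b - a)%nat -> forall s, 0 <= s <= 1 ->
  Hq lam tau (a - 1 + j) s = Upn j (refl (Hq lam tau (a - 1))) (1 - s).
Proof.
  intros Ha Hd j. induction j; intros Hj s Hs.
  - rewrite Nat.add_0_r. simpl. unfold refl. f_equal. ring.
  - replace (a - 1 + S j)%nat with (S (a - 1 + j)) by lia.
    rewrite H_S by lia. destruct (excluded_middle_informative _) as [D|D].
    + rewrite clamp_id by auto.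
      rewrite (RInt_ext_R _ (fun z => Upn j (refl (Hq lam tau (a - 1))) (1 - z))).
      2: { intros z Hz. rewrite Rmin_left, Rmax_right in Hz by lra. apply IHj; [lia|lra]. }
      rewrite RI_refl by (apply Upn_cont, refl_cont, H_cont).
      simpl. unfold Up. rewrite clamp_id by lra. f_equal. ring.
    + exfalso. apply D, Hd. lia.
Qed.

Lemma at_b_up lam tau a b : (2 <= a)%nat -> (a < b)%nat -> (forall i, (a <= i < b)%nat -> ~ descent lam i) ->
  descent lam b -> forall s, 0 <= s <= 1 -> Hq lam tau b s = X (b - a) (Hq lam tau (a - 1)) s.
Proof.
  intros Ha Hab Hd Db s Hs.
  replace b with (S (b - 1)) at 1 by lia. rewrite H_S by lia.
  replace (S (b - 1)) with b by lia.
  destruct (excluded_middle_informative _) as [D|D]; [|tauto].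
  rewrite clamp_id by auto. unfold X. f_equal. apply functional_extensionality; intros z.
  replace (b - 1)%nat with (a - 1 + (b - a))%nat by lia. apply (run_up lam tau a b); auto.
Qed.

Lemma at_b_dn lam tau a b : (2 <= a)%nat -> (a < b)%nat -> (forall i, (a <= i < b)%nat -> descent lam i) ->
  ~ descent lam b -> forall s, 0 <= s <= 1 -> Hq lam tau b s = X (b - a) (refl (Hq lam tau (a - 1))) (1 - s).
Proof.
  intros Ha Hab Hd Db s Hs.
  replace b with (S (b - 1)) at 1 by lia. rewrite H_S by lia.
  replace (S (b - 1)) with b by lia.
  destruct (excluded_middle_informative _) as [D|D]; [tauto|].
  rewrite clamp_id by auto.
  rewrite (RInt_ext_R _ (fun z => Upn (b - a) (refl (Hq lam tau (a - 1))) (1 - z))).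
  2: { intros z Hz. rewrite Rmin_left, Rmax_right in Hz by lra.
       replace (b - 1)%nat with (a - 1 + (b - a))%nat by lia. apply (run_dn lam tau a b); auto; lra. }
  rewrite RI_refl by (apply Upn_cont, refl_cont, H_cont).
  unfold X. f_equal. ring.
Qed.

Lemma pos_int h x : Cont h -> (forall z, 0 <= z <= 1 -> 0 <= h z) -> 0 <= x <= 1 -> 0 < h x -> 0 < RI h 0 1.
Proof.
  intros Hc Hp Hx Hpos.
  assert (Hcp: continuity_pt h x) by (apply continuity_pt_filterlim; apply Hc).
  destruct (Hcp (h x / 2)) as [d [Hd Hdd]]; [lra|].
  set (c := Rmax 0 (x - d / 2)). set (e := Rmin 1 (x + d / 2)).
  assert (Hce: 0 <= c < e /\ e <= 1).
  { unfold c, e, Rmax, Rmin; repeat destruct Rle_dec; lra. }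
  assert (In: forall y, c < y < e -> 0 < h y).
  { intros y Hy. assert (Rabs (y - x) < d).
    { unfold c, e, Rmax, Rmin in Hy; repeat destruct Rle_dec; unfold Rabs; destruct Rcase_abs; lra. }
    specialize (Hdd y). simpl in Hdd. unfold R_dist, D_x, no_cond in Hdd.
    destruct (Req_dec y x) as [->|Hne]; [lra|].
    assert (Rabs (h y - h x) < h x / 2) by (apply Hdd; split; [split; auto|]; auto).
    unfold Rabs in H0; destruct Rcase_abs in H0; lra. }
  assert (G: 0 < RI h c e) by (unfold RI; apply RInt_gt_0; [lra|auto|intros; apply Hc]).
  assert (G1: 0 <= RI h 0 c) by (apply RI_ge0; [lra|apply Cont_ex; auto|intros; apply Hp; lra]).
  assert (G2: 0 <= RI h e 1) by (apply RI_ge0; [lra|apply Cont_ex; auto|intros; apply Hp; lra]).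
  rewrite <- (RInt_Chasles_R h 0 e 1) by (apply Cont_ex; auto).
  rewrite <- (RInt_Chasles_R h 0 c e) by (apply Cont_ex; auto).
  lra.
Qed.

Lemma exmax (P : nat -> Prop) N : forall d k0, (N - k0 <= d)%nat -> P k0 -> (forall k, P k -> (k <= N)%nat) ->
  exists k, P k /\ forall k', P k' -> (k' <= k)%nat.
Proof.
  induction d; intros k0 Hd Hk0 Hb.
  - exists k0. split; auto. intros k' Hk'. specialize (Hb k' Hk'). lia.
  - destruct (classic (exists k, P k /\ (k0 < k)%nat)) as [[k [Pk Hk]]|Hn].
    + apply (IHd k); auto. specialize (Hb k Pk). lia.
    + exists k0. split; auto. intros k' Hk'. destruct (Nat.le_gt_cases k' k0); auto.
      exfalso; apply Hn; eauto.
Qed.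

Lemma first_run lam : (2 <= csize lam)%nat -> exists b, is_first_run lam 1 b /\ (2 <= b)%nat.
Proof.
  intros Hn.
  assert (U2: uniform_block lam 1 2).
  { unfold uniform_block. split; [lia|split; [lia|]].
    destruct (classic (descent lam 1)) as [D|D].
    - right. intros i Hi. replace i with 1%nat by lia. auto.
    - left. intros i Hi. replace i with 1%nat by lia. auto. }
  destruct (exmax (uniform_block lam 1) (csize lam) (csize lam) 2) as [b [Ub Mb]]; auto. lia.
  { intros k [_ [Hk _]]. auto. }
  exists b. split; [|apply Mb; auto].
  unfold is_first_run, is_run. split; auto. split; auto.
  intros a' b' Ha' Hb' U'. assert (a' = 1%nat) by (destruct U' as [? _]; lia). subst a'.
  split; auto. specialize (Mb b' U'). lia.
Qed.

Lemma run_info lam a b : is_interior_run lam a b ->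
  (2 <= a)%nat /\ (a < b)%nat /\ (b + 1 <= csize lam)%nat /\
  (((forall i, (a <= i < b)%nat -> ~ descent lam i) /\ descent lam (a - 1) /\ descent lam b) \/
   ((forall i, (a <= i < b)%nat -> descent lam i) /\ ~ descent lam (a - 1) /\ ~ descent lam b)).
Proof.
  intros [[[Hab [Hbn Hu]] Hmax] [Ha1 Hbn1]].
  assert (2 <= a)%nat by lia.
  split; auto. split; [lia|]. split; [lia|].
  destruct Hu as [Up|Dn].
  - left. split; auto. split.
    + apply NNPP. intros D. destruct (Hmax (a - 1)%nat b) as [E _]; try lia.
      split; [lia|split; [lia|]]. left. intros i Hi. destruct (Nat.eq_dec i (a - 1)) as [->|]; auto. apply Up; lia.
    + apply NNPP. intros D. destruct (Hmax a (b + 1)%nat) as [_ E]; try lia.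
      split; [lia|split; [lia|]]. left. intros i Hi. destruct (Nat.eq_dec i b) as [->|]; auto. apply Up; lia.
  - right. split; auto. split.
    + intros D. destruct (Hmax (a - 1)%nat b) as [E _]; try lia.
      split; [lia|split; [lia|]]. right. intros i Hi. destruct (Nat.eq_dec i (a - 1)) as [->|]; auto. apply Dn; lia.
    + intros D. destruct (Hmax a (b + 1)%nat) as [_ E]; try lia.
      split; [lia|split; [lia|]]. right. intros i Hi. destruct (Nat.eq_dec i b) as [->|]; auto. apply Dn; lia.
Qed.

Lemma finish P Q FL FU GL GU x m :
  Cont P -> Cont Q -> (forall s, 0 <= s <= 1 -> 0 <= Q s) -> 0 <= x <= 1 -> 0 < Q x ->
  (forall s, 0 <= s <= 1 -> GL * P s <= FU * Q s) -> (forall s, 0 <= s <= 1 -> FL * Q s <= GU * P s) ->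
  0 < GL -> 0 < GU -> FU / GL - FL / GU <= m ->
  Rabs (P x / Q x - RI P 0 1 / RI Q 0 1) <= m.
Proof.
  intros CP CQ HQ Hx Qx I1 I2 HGL HGU Hr.
  assert (IQ: 0 < RI Q 0 1) by (apply (pos_int Q x); auto).
  assert (J1: GL * RI P 0 1 <= FU * RI Q 0 1).
  { rewrite <- !RInt_scal_R by (apply Cont_ex; auto).
    apply RI_le; try lra; try (apply ex_RInt_scal_R, Cont_ex; auto). intros; apply I1; lra. }
  assert (J2: FL * RI Q 0 1 <= GU * RI P 0 1).
  { rewrite <- !RInt_scal_R by (apply Cont_ex; auto).
    apply RI_le; try lra; try (apply ex_RInt_scal_R, Cont_ex; auto). intros; apply I2; lra. }
  specialize (I1 x Hx). specialize (I2 x Hx).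
  assert (A1: P x / Q x <= FU / GL).
  { apply Rmult_le_reg_r with (Q x * GL); [apply Rmult_lt_0_compat; lra|].
    replace (P x / Q x * (Q x * GL)) with (GL * P x) by (field; lra).
    replace (FU / GL * (Q x * GL)) with (FU * Q x) by (field; lra). auto. }
  assert (A2: FL / GU <= P x / Q x).
  { apply Rmult_le_reg_r with (Q x * GU); [apply Rmult_lt_0_compat; lra|].
    replace (P x / Q x * (Q x * GU)) with (GU * P x) by (field; lra).
    replace (FL / GU * (Q x * GU)) with (FL * Q x) by (field; lra). auto. }
  set (IP := RI P 0 1) in *. set (IQ' := RI Q 0 1) in *.
  assert (A3: IP / IQ' <= FU / GL).
  { apply Rmult_le_reg_r with (IQ' * GL); [apply Rmult_lt_0_compat; lra|].
    replace (IP / IQ' * (IQ' * GL)) with (GL * IP) by (field; lra).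
    replace (FU / GL * (IQ' * GL)) with (FU * IQ') by (field; lra). auto. }
  assert (A4: FL / GU <= IP / IQ').
  { apply Rmult_le_reg_r with (IQ' * GU); [apply Rmult_lt_0_compat; lra|].
    replace (IP / IQ' * (IQ' * GU)) with (GU * IP) by (field; lra).
    replace (FL / GU * (IQ' * GU)) with (FL * IQ') by (field; lra). auto. }
  unfold Rabs; destruct Rcase_abs; lra.
Qed.

Lemma cell_b lam t b m (ft f1 : R -> R) (sg : R -> R) : (1 <= m)%nat ->
  Cont ft -> Cont f1 -> (forall z, 0 <= z <= 1 -> 0 <= ft z <= f1 z) ->
  (forall z1 z2, 0 <= z1 -> z1 <= z2 -> z2 <= 1 -> f1 z2 <= f1 z1) ->
  (forall s, 0 <= s <= 1 -> 0 <= sg s <= 1) ->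
  (forall s, 0 <= s <= 1 -> Hq lam t b s = X m ft (sg s)) ->
  (forall s, 0 <= s <= 1 -> Hq lam 1 b s = X m f1 (sg s)) ->
  exists FL FU GL GU,
    (forall s, 0 <= s <= 1 -> GL * Hq lam t b s <= FU * Hq lam 1 b s) /\
    (forall s, 0 <= s <= 1 -> FL * Hq lam 1 b s <= GU * Hq lam t b s) /\
    (GU <= 0 -> forall s, 0 <= s <= 1 -> Hq lam 1 b s <= 0) /\
    (0 < GU -> 0 < GL /\ FU / GL - FL / GU <= 2 / INR m).
Proof.
  intros Hm Cf C1 Hfg Hmono Hsg Et E1.
  exists (RI (fun z => ft z * (1 - z)^m) 0 1), (RI (fun z => ft z * (1 - z)^(m-1)) 0 1),
         (RI (fun z => f1 z * (1 - z)^m) 0 1), (RI (fun z => f1 z * (1 - z)^(m-1)) 0 1).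
  split; [|split; [|split]].
  - intros s Hs. rewrite Et, E1 by auto. apply (core_a ft f1 m); auto.
  - intros s Hs. rewrite Et, E1 by auto. apply (core_a ft f1 m); auto.
  - intros HG s Hs. rewrite E1 by auto.
    destruct (core_b ft f1 m C1 Hfg Hm (sg s) (Hsg s Hs)) as [_ B].
    apply Rle_trans with (1 := B). unfold Rdiv. apply Rmult_le_0_r; auto.
    left; apply Rinv_0_lt_compat, INR_fact_lt_0.
  - intros HG. apply (core_c ft f1 m); auto.
Qed.

Lemma iint_S k F : iint (S k) F = Defs.RInt (fun y => iint k (fun v => F (upd v (S k) y))) 0 1.
Proof. reflexivity. Qed.

Lemma DR_on phi h : Cont h -> (forall y, 0 <= y <= 1 -> phi y = h y) -> Defs.RInt phi 0 1 = RI h 0 1.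
Proof.
  intros Hc E. assert (Ex: ex_RInt phi 0 1).
  { apply (ex_RInt_ext_R h). intros y Hy. rewrite Rmin_left, Rmax_right in Hy by lra. symmetry; apply E; lra.
    apply Cont_ex; auto. }
  rewrite DR_ex by auto. apply RInt_ext_R. intros y Hy. rewrite Rmin_left, Rmax_right in Hy by lra. apply E; lra.
Qed.

Lemma mono_dec h : Cont h -> (forall z, 0 <= h z) -> forall z1 z2, 0 <= z1 -> z1 <= z2 -> z2 <= 1 ->
  RI h (clamp z2) 1 <= RI h (clamp z1) 1.
Proof.
  intros Hc Hp z1 z2 H1 H2 H3. rewrite !clamp_id by lra.
  rewrite <- (RInt_Chasles_R h z1 z2 1) by (apply Cont_ex; auto).
  assert (0 <= RI h z1 z2) by (apply RI_ge0; auto; apply Cont_ex; auto). lra.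
Qed.

Lemma mono_inc h : Cont h -> (forall z, 0 <= h z) -> forall z1 z2, 0 <= z1 -> z1 <= z2 -> z2 <= 1 ->
  RI h 0 (clamp z1) <= RI h 0 (clamp z2).
Proof.
  intros Hc Hp z1 z2 H1 H2 H3. rewrite !clamp_id by lra.
  rewrite <- (RInt_Chasles_R h 0 z1 z2) by (apply Cont_ex; auto).
  assert (0 <= RI h z1 z2) by (apply RI_ge0; auto; apply Cont_ex; auto). lra.
Qed.

Theorem mainTheorem16 (lam : list nat) (A : R) (M : nat) :
  is_composition lam ->
  0 <= A ->
  (forall a b, is_first_run lam a b -> INR (run_length a b) <= A) ->
  (exists a b, is_interior_run lam a b /\ run_length a b = M) ->
  (forall a b, is_interior_run lam a b -> (run_length a b <= M)%nat) ->
  (2 < M)%nat ->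
  forall x : R, 0 <= x <= 1 -> 0 < dens_XF lam x ->
  forall t : R, 0 <= t <= 1 ->
    Rabs (cdf_XI_given_XF lam x t - cdf_XI lam t) <= 4 * A ^ 2 / (INR M - 2).
Proof.
  intros Hcomp HA Hfirst [a [b [Hint HM]]] _ HM2 x Hx Hd t Ht.
  destruct (run_info _ _ _ Hint) as [Ha [Hab [Hbn Hcase]]].
  destruct (first_run lam) as [b1 [Hfr Hb1]]; [lia|].
  assert (HA2: 2 <= A).
  { specialize (Hfirst 1%nat b1 Hfr). unfold run_length in Hfirst.
    replace (b1 - 1 + 1)%nat with b1 in Hfirst by lia. apply le_INR in Hb1.
    replace (INR 2) with 2 in Hb1 by (simpl; lra). lra. }
  assert (Hn: exists n', csize lam = S n') by (exists (csize lam - 1)%nat; lia).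
  destruct Hn as [n' Hn].
  set (m := (b - a)%nat).
  assert (HMm: M = S m) by (unfold run_length in HM; unfold m; lia).
  assert (Hm2: (2 <= m)%nat) by (unfold m; lia).
  assert (Hn1: (1 <= n')%nat) by lia.
  assert (EQx: forall tau, 0 <= tau <= 1 -> forall y, 0 <= y <= 1 -> slice_dens lam y tau = Hq lam tau n' y).
  { intros tau Htau y Hy. rewrite (slice_GG lam tau n' y) by auto. apply GG_H; auto. }
  assert (Edens: forall y, 0 <= y <= 1 -> dens_XF lam y = Hq lam 1 n' y).
  { intros y Hy. rewrite (dens_slice lam y n' Hn). apply EQx; auto; lra. }
  assert (Econd: cdf_XI_given_XF lam x t = Hq lam t n' x / Hq lam 1 n' x).
  { unfold cdf_XI_given_XF. rewrite EQx, Edens; auto. }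
  assert (Ecdf: cdf_XI lam t = RI (Hq lam t n') 0 1 / RI (Hq lam 1 n') 0 1).
  { unfold cdf_XI. rewrite Hn, !iint_S. f_equal.
    - apply DR_on. apply H_cont. intros y Hy. rewrite <- EQx by auto.
      unfold slice_dens. rewrite Hn. simpl (S n' - 1)%nat. rewrite Nat.sub_0_r. reflexivity.
    - apply DR_on. apply H_cont. intros y Hy. rewrite <- Edens by auto.
      unfold dens_XF. rewrite Hn. simpl (S n' - 1)%nat. rewrite Nat.sub_0_r. reflexivity. }
  assert (Ht1: 0 <= 1 <= 1) by lra.
  assert (Cb: exists FL FU GL GU,
    (forall s, 0 <= s <= 1 -> GL * Hq lam t b s <= FU * Hq lam 1 b s) /\
    (forall s, 0 <= s <= 1 -> FL * Hq lam 1 b s <= GU * Hq lam t b s) /\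
    (GU <= 0 -> forall s, 0 <= s <= 1 -> Hq lam 1 b s <= 0) /\
    (0 < GU -> 0 < GL /\ FU / GL - FL / GU <= 2 / INR m)).
  { destruct Hcase as [[Up [Da Db]]|[Dn [Da Db]]].
    - apply (cell_b lam t b m (Hq lam t (a - 1)) (Hq lam 1 (a - 1)) (fun s => s)); try lia.
      + apply H_cont.
      + apply H_cont.
      + intros z Hz. split. apply H_nonneg; auto. apply H_le; auto.
      + intros z1 z2 H1 H2 H3. replace (a - 1)%nat with (S (a - 2)) by lia.
        rewrite !H1_S. replace (S (a - 2)) with (a - 1)%nat by lia.
        destruct (excluded_middle_informative _) as [_|D]; [|tauto].
        apply mono_dec; auto. apply H_cont. intros; apply H_nonneg; auto.
      + auto.
      + intros s Hs. apply at_b_up; auto.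
      + intros s Hs. apply at_b_up; auto.
    - apply (cell_b lam t b m (refl (Hq lam t (a - 1))) (refl (Hq lam 1 (a - 1))) (fun s => 1 - s)); try lia.
      + apply refl_cont, H_cont.
      + apply refl_cont, H_cont.
      + intros z Hz. unfold refl. split. apply H_nonneg; auto. apply H_le; auto.
      + intros z1 z2 H1 H2 H3. unfold refl. replace (a - 1)%nat with (S (a - 2)) by lia.
        rewrite !H1_S. replace (S (a - 2)) with (a - 1)%nat by lia.
        destruct (excluded_middle_informative _) as [D|_]; [tauto|].
        apply mono_inc; try lra. apply H_cont. intros; apply H_nonneg; auto.
      + intros; lra.
      + intros s Hs. apply at_b_dn; auto.
      + intros s Hs. apply at_b_dn; auto. }
  destruct Cb as [FL [FU [GL [GU [I1 [I2 [I3 I4]]]]]]].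
  assert (Qx: 0 < Hq lam 1 n' x) by (rewrite <- Edens; auto).
  assert (HGU: 0 < GU).
  { destruct (Rle_lt_dec GU 0) as [Hle|]; auto. exfalso.
    assert (P0: forall s, 0 <= s <= 1 -> 1 * Hq lam 1 b s <= 0 * Hq lam 1 b s).
    { intros s Hs. specialize (I3 Hle s Hs). lra. }
    pose proof (prop lam 1 1 b 1 0 ltac:(lia) P0 n' ltac:(lia) x Hx). lra. }
  destruct (I4 HGU) as [HGL Hr].
  rewrite Econd, Ecdf.
  apply Rle_trans with (2 / INR m).
  - apply (finish (Hq lam t n') (Hq lam 1 n') FL FU GL GU x (2 / INR m)); auto.
    + apply H_cont.
    + apply H_cont.
    + intros; apply H_nonneg; auto.
    + apply (prop lam t 1 b GL FU); auto; lia.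
    + apply (prop lam 1 t b FL GU); auto; lia.
  - rewrite HMm, S_INR.
    assert (Hm2r: 2 <= INR m) by (replace 2 with (INR 2) by (simpl; lra); apply le_INR; auto).
    apply Rle_trans with (16 / (INR m + 1 - 2)).
    + apply Rmult_le_reg_r with (INR m * (INR m - 1)); [nra|].
      replace (2 / INR m * (INR m * (INR m - 1))) with (2 * (INR m - 1)) by (field; lra).
      replace (16 / (INR m + 1 - 2) * (INR m * (INR m - 1))) with (16 * INR m) by (field; lra).
      lra.
    + unfold Rdiv. apply Rmult_le_compat_r.
      * left; apply Rinv_0_lt_compat; lra.
      * assert (4 <= A ^ 2) by (simpl; nra). lra.
Qed.
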